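(* Let $S,T$ be nonempty subsets of $\{1,\dots,n-1\}$ and let $D$ be the digraph of the Boolean Toeplitz matrix $T_n\langle S;T\rangle$. If two vertices $u$ and $v$ are adjacent in the $m$-step competition graph $C^m(D)$ for some positive integer $m$, then $u-v$ is a multiple of $\gcd\{s+t: s\in S,t\in T\}$.
   Context: $T_n\langle S;T\rangle$ is the $n\times n$ $(0,1)$-matrix whose $(i,j)$-entry is $1$ iff $j-i\in S$ or $i-j\in T$; its digraph has vertex set $[n]$ and arc $(i,j)$ iff that entry is $1$. $C^m(D)$ is the graph on $[n]$ in which distinct $u,v$ are adjacent iff there is a vertex $w$ with directed $(u,w)$-walk and directed $(v,w)$-walk both of length $m$. *)

(* Defs.v *)
From mathcomp Require Import all_boot all_order all_algebra.
Set Implicit Arguments. Unset Strict Implicit. Unset Printing Implicit Defensive.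
Import GRing.Theory Num.Theory.

(* Vertices of T_n<S;T> are the n elements of 'I_n; vertex k : 'I_n stands for
   the paper's vertex k+1 in [n] (a shift that preserves all differences).
   S and T are subsets of {1,..,n-1}, modelled as sets of 'I_n avoiding 0. *)

Definition toeplitz_arc (n : nat) (S T : {set 'I_n}) (i j : 'I_n) : bool :=
  [exists s in S, (i + s == j :> nat)] || [exists t in T, (j + t == i :> nat)].

Fixpoint walk (n : nat) (S T : {set 'I_n}) (m : nat) (u w : 'I_n) : bool :=
  match m with
  | 0 => u == w
  | m'.+1 => [exists x, toeplitz_arc S T u x && walk S T m' x w]
  end.

Definition mstep_comp_adj (n : nat) (S T : {set 'I_n}) (m : nat) (u v : 'I_n) : bool :=
  (u != v) && [exists w, walk S T m u w && walk S T m v w].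

Definition gcd_sums (n : nat) (S T : {set 'I_n}) : nat :=
  \big[gcdn/0]_(s in S) \big[gcdn/0]_(t in T) (s + t)%N.

(* Main.v *)
Require Import Defs.
From mathcomp Require Import all_boot all_order all_algebra.
From mathcomp Require Import ring.
Import GRing.Theory.
Local Open Scope ring_scope.

Lemma gcd_sums_dvd (n : nat) (S T : {set 'I_n}) s t :
  s \in S -> t \in T -> (gcd_sums S T %| s + t)%N.
Proof.
move=> hs ht; rewrite /gcd_sums (bigD1 s) //=.
apply: dvdn_trans (dvdn_gcdl _ _) _.
by rewrite (bigD1 t) //= dvdn_gcdl.
Qed.

Lemma dvdz_natE (d m : nat) : (Posz d %| Posz m)%Z = (d %| m)%N.
Proof. by rewrite dvdzE. Qed.

Lemma arc_step (n : nat) (S T : {set 'I_n}) (s0 t0 : 'I_n) (i j : 'I_n) :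
  s0 \in S -> t0 \in T -> toeplitz_arc S T i j ->
  (Posz (gcd_sums S T) %| Posz j - Posz i - Posz s0)%Z.
Proof.
move=> hs0 ht0 /orP [/existsP [s /andP [hs /eqP e]] | /existsP [t /andP [ht /eqP e]]].
- have -> : Posz j - Posz i - Posz s0 = Posz (s + t0)%N - Posz (s0 + t0)%N.
    by rewrite -e !PoszD; ring.
  by apply: rpredB; rewrite dvdz_natE gcd_sums_dvd.
- have -> : Posz j - Posz i - Posz s0 = - Posz (s0 + t)%N.
    by rewrite -e !PoszD; ring.
  by rewrite rpredN dvdz_natE gcd_sums_dvd.
Qed.

Lemma walk_step (n : nat) (S T : {set 'I_n}) (s0 t0 : 'I_n) m (u w : 'I_n) :
  s0 \in S -> t0 \in T -> walk S T m u w ->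
  (Posz (gcd_sums S T) %| Posz w - Posz u - Posz s0 *+ m)%Z.
Proof.
move=> hs0 ht0; elim: m u => [|m IH] u /=.
  by move=> /eqP ->; rewrite mulr0n subrr subr0 dvdz0.
move=> /existsP [x /andP [ha hw]].
have := @arc_step _ _ _ _ _ _ _ hs0 ht0 ha; have := IH _ hw.
have -> : Posz w - Posz u - Posz s0 *+ m.+1 =
  (Posz w - Posz x - Posz s0 *+ m) + (Posz x - Posz u - Posz s0).
  by rewrite mulrS; ring.
by move=> h1 h2; apply: rpredD.
Qed.

Theorem theorem2p3 (n : nat) (S T : {set 'I_n})
  (hS0 : S != set0) (hT0 : T != set0)
  (hS : forall s, s \in S -> (0 < s)%N)
  (hT : forall t, t \in T -> (0 < t)%N)
  (u v : 'I_n) (m : nat) (hm : (0 < m)%N)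
  (hadj : mstep_comp_adj S T m u v) :
  (Posz (gcd_sums S T) %| Posz (nat_of_ord u) - Posz (nat_of_ord v))%Z.
Proof.
case/set0Pn: hS0 => s0 hs0; case/set0Pn: hT0 => t0 ht0.
move: hadj => /andP [_ /existsP [w /andP [hu hv]]].
have h1 := @walk_step _ _ _ _ _ _ _ _ hs0 ht0 hu; have h2 := @walk_step _ _ _ _ _ _ _ _ hs0 ht0 hv.
have -> : Posz u - Posz v =
  (Posz w - Posz v - Posz s0 *+ m) - (Posz w - Posz u - Posz s0 *+ m).
  by ring.
by apply: rpredB.
Qed.
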